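(* Consider the closed-loop system described in the context, in which at each time $k$ the input $u_k=c^\star_{0|k}$ is obtained by solving the MPC problem $(\mathrm{MPC}_k)$ with $\bar x_{0|k}=\hat x_k$ (the Kalman filter estimate) and the tightened sets $\bar{\mathcal{X}}_{\mathrm{RF},i}$, $\bar{\mathcal{U}}_{\mathrm{RF},i}$, $\bar{\mathcal{X}}_{f,\mathrm{RF}}$. For any $k\ge 0$, if $(\mathrm{MPC}_k)$ is feasible, then, with probability (conditional on $y_{0:k}$) no smaller than $1-p_f$, $(\mathrm{MPC}_{k+1})$ is feasible. More precisely, $(\mathrm{MPC}_{k+1})$ is feasible whenever the realized disturbance $n_k$ in $\hat x_{k+1}=A\hat x_k+Bu_k+n_k$ lies in $\mathcal{E}^n_{1-p_f}$.
   Context: System: $x_{k+1}=Ax_k+Bu_k+w_k$, $y_k=Cx_k+v_k$, with $w_k\sim\mathcal{N}(0,Q)$, $v_k\sim\mathcal{N}(0,R)$ i.i.d. and mutually independent, $x_0\sim\mathcal{N}(\mu_0,\Sigma_0)$; $(A,B)$ controllable, $(A,C)$ observable. Kalman filter: $\hat x^-_{k+1}=A\hat x_k+Bu_k$, $\hat x_{k+1}=\hat x^-_{k+1}+L_{k+1}(y_{k+1}-C\hat x^-_{k+1})$, $\hat x_0^-=\mu_0$, $P_0^-=\Sigma_0$, $P^-_{k+1}=AP_kA^\top+Q$, $P_{k+1}=(I-L_{k+1}C)P^-_{k+1}$, $L_{k+1}=P^-_{k+1}C^\top(CP^-_{k+1}C^\top+R)^{-1}$. Then $\hat x_{k+1}=A\hat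 x_k+Bu_k+n_k$ with $n_k=L_{k+1}CAe_k+L_{k+1}Cw_k+L_{k+1}v_{k+1}$, $e_k=x_k-\hat x_k$, and conditionally on $y_{0:k}$, $n_k\sim\mathcal{N}(0,\Phi_k)$, $\Phi_k=L_{k+1}(C(AP_kA^\top+Q)C^\top+R)L_{k+1}^\top$; also $e_k\mid y_{0:k}\sim\mathcal{N}(0,P_k)$. Constraints: $\mathcal{X}\subseteq\mathbb{R}^{n_x}$ a convex polyhedron, $\mathcal{U}$ a polytope, probabilities $p_x,p_f\in(0,1)$. $\mathcal{E}^e_{1-p_x}$ and $\mathcal{E}^n_{1-p_f}$ are compact polytopes containing the origin in their interior with $\mathbb{P}(e_k\in\mathcal{E}^e_{1-p_x}\mid y_{0:k})\ge 1-p_x$ and $\mathbb{P}(n_k\in\mathcal{E}^n_{1-p_f}\mid y_{0:k})\ge 1-p_f$ for all $k$. $K$ is a gain with $A_{\mathrm{cl}}:=A+BK$ Schur. $\oplus$ is Minkowski sum, $\mathcal{X}\ominus\mathcal{Y}=\{x: x+y\in\mathcal{X}\ \forall y\in\mathcal{Y}\}$ is the Pontryagin difference, $\bigoplus_{q=0}^{-1}(\cdot)=\{0\}$. Tightened sets: $\hat{\mathcal{X}}=\mathcal{X}\ominus\mathcal{E}^e_{1-p_x}$; $\bar{\mathcal{X}}_{\mathrm{RF},i}=\hat{\mathcal{X}}\ominus\bigoplus_{q=0}^{i-1}A_{\mathrm{cl}}^q\mathcal{E}^n_{1-p_f}$ and $\bar{\mathcal{U}}_{\mathrm{RF},i}=\mathcal{U}\ominus\bigoplus_{q=0}^{i-1}KA_{\mathrm{cl}}^q\mathcal{E}^n_{1-p_f}$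 for $i=0,\dots,N-1$; $\hat{\mathcal{X}}_f\subseteq\hat{\mathcal{X}}$ is a robust positive invariant set for $x^+=A_{\mathrm{cl}}x+n$, $n\in\mathcal{E}^n_{1-p_f}$ (i.e. $x\in\hat{\mathcal{X}}_f\Rightarrow A_{\mathrm{cl}}x+n\in\hat{\mathcal{X}}_f$ for all $n\in\mathcal{E}^n_{1-p_f}$) with $Kx\in\mathcal{U}$ for all $x\in\hat{\mathcal{X}}_f$; $\bar{\mathcal{X}}_{f,\mathrm{RF}}=\hat{\mathcal{X}}_f\ominus\bigoplus_{q=0}^{N-1}A_{\mathrm{cl}}^q\mathcal{E}^n_{1-p_f}$. MPC problem $(\mathrm{MPC}_k)$ with horizon $N\ge1$: minimize $\sum_{i=0}^{N-1}\ell(\bar x_{i|k},c_{i|k})+O(\bar x_{N|k})$ over $c_{0|k},\dots,c_{N-1|k}$ subject to $\bar x_{i+1|k}=A\bar x_{i|k}+Bc_{i|k}$, $\bar x_{0|k}=\hat x_k$, $\bar x_{i|k}\in\bar{\mathcal{X}}_{\mathrm{RF},i}$, $c_{i|k}\in\bar{\mathcal{U}}_{\mathrm{RF},i}$ for $i=0,\dots,N-1$, and $\bar x_{N|k}\in\bar{\mathcal{X}}_{f,\mathrm{RF}}$; $\ell$ and $O$ are given cost functions. ''Feasible'' means the constraint set is nonempty; the applied input is $u_k=c^\star_{0|k}$ from an optimal solution. *)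

(* Defs.v *)
From HB Require Import structures.
From mathcomp Require Import all_boot all_order all_algebra.
From mathcomp Require Import all_classical all_reals all_analysis.
From mathcomp Require Import complex.

Set Implicit Arguments.
Unset Strict Implicit.
Unset Printing Implicit Defensive.

Import Order.TTheory GRing.Theory Num.Theory.
Local Open Scope classical_set_scope.
Local Open Scope ring_scope.

Section Defs.
Variable R : realType.

Definition msum n (S T : set 'cV[R]_n) : set 'cV[R]_n :=
  [set z | exists x y, S x /\ T y /\ z = x + y].

Definition pdiff n (X Y : set 'cV[R]_n) : set 'cV[R]_n :=
  [set x | forall y, Y y -> X (x + y)].

Definition limg m n (M : 'M[R]_(m, n)) (E : set 'cV[R]_n) : set 'cV[R]_m :=
  [set M *m y | y in E].

Fixpoint msum_upto n (f : nat -> set 'cV[R]_n) (i : nat) : set 'cV[R]_n :=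
  match i with
  | 0 => [set 0]
  | i'.+1 => msum (msum_upto f i') (f i')
  end.

Definition polyhedron n (S : set 'cV[R]_n) : Prop :=
  exists (m : nat) (H : 'M[R]_(m, n)) (h : 'cV[R]_m),
    S = [set x | forall i : 'I_m, (H *m x) i 0 <= h i 0].

Definition bounded_set n (S : set 'cV[R]_n) : Prop :=
  exists M : R, forall x, S x -> forall i : 'I_n, `|x i 0| <= M.

Definition polytope n (S : set 'cV[R]_n) : Prop := polyhedron S /\ bounded_set S.

Definition zero_interior n (S : set 'cV[R]_n) : Prop :=
  exists eps : R, 0 < eps /\
    forall x : 'cV[R]_n, (forall i : 'I_n, `|x i 0| < eps) -> S x.

(* Kalman rank criterion: [B, AB, ..., A^{n-1}B] has rank n,
   i.e. the row spaces of (A^i B)^T together span everything. *)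
Definition controllable n m (A : 'M[R]_n) (B : 'M[R]_(n, m)) : Prop :=
  \rank (\sum_(i < n) <<(A ^+ i *m B)^T>>)%MS = n.

Definition observable n p (A : 'M[R]_n) (C : 'M[R]_(p, n)) : Prop :=
  \rank (\sum_(i < n) <<C *m A ^+ i>>)%MS = n.

Definition schur n (A : 'M[R]_n) : Prop :=
  forall l : R[i], eigenvalue (map_mx (fun x : R => (x%:C)%C) A) l -> `|l| < 1.

Fixpoint traj nx nu (A : 'M[R]_nx) (B : 'M[R]_(nx, nu)) (x0 : 'cV[R]_nx)
    (c : nat -> 'cV[R]_nu) (i : nat) : 'cV[R]_nx :=
  match i with
  | 0 => x0
  | i'.+1 => A *m traj A B x0 c i' + B *m c i'
  end.

Section MPC.
Variables (nx nu : nat) (A : 'M[R]_nx) (B : 'M[R]_(nx, nu)) (K : 'M[R]_(nu, nx)).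
Variables (X Ee En Xf : set 'cV[R]_nx) (U : set 'cV[R]_nu) (N : nat).

Definition Acl : 'M[R]_nx := A + B *m K.

Definition Xhat : set 'cV[R]_nx := pdiff X Ee.

Definition XRF (i : nat) : set 'cV[R]_nx :=
  pdiff Xhat (msum_upto (fun q => limg (Acl ^+ q) En) i).

Definition URF (i : nat) : set 'cV[R]_nu :=
  pdiff U (msum_upto (fun q => limg (K *m Acl ^+ q) En) i).

Definition XfRF : set 'cV[R]_nx :=
  pdiff Xf (msum_upto (fun q => limg (Acl ^+ q) En) N).

(* c = (c_{0|k}, ..., c_{N-1|k}) (entries beyond N-1 are irrelevant)
   satisfies the constraints of (MPC) with initial state x0 *)
Definition mpc_admissible (x0 : 'cV[R]_nx) (c : nat -> 'cV[R]_nu) : Prop :=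
  (forall i, (i < N)%N -> XRF i (traj A B x0 c i) /\ URF i (c i)) /\
  XfRF (traj A B x0 c N).

Definition mpc_feasible (x0 : 'cV[R]_nx) : Prop :=
  exists c, mpc_admissible x0 c.

Definition mpc_cost (l : 'cV[R]_nx -> 'cV[R]_nu -> R) (O : 'cV[R]_nx -> R)
    (x0 : 'cV[R]_nx) (c : nat -> 'cV[R]_nu) : R :=
  \sum_(i < N) l (traj A B x0 c i) (c i) + O (traj A B x0 c N).

Definition mpc_optimal l O (x0 : 'cV[R]_nx) (c : nat -> 'cV[R]_nu) : Prop :=
  mpc_admissible x0 c /\
  forall c', mpc_admissible x0 c' -> mpc_cost l O x0 c <= mpc_cost l O x0 c'.

End MPC.
End Defs.

(* Main.v *)
Require Import Defs.
From HB Require Import structures.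
From mathcomp Require Import all_boot all_order all_algebra.
From mathcomp Require Import all_classical all_reals all_analysis.
From mathcomp Require Import complex.

Import Order.TTheory GRing.Theory Num.Theory.
Local Open Scope classical_set_scope.
Local Open Scope ring_scope.


Section Helpers.
Variable R : realType.

Lemma sum_shift n (M : 'M[R]_n) (E : set 'cV[R]_n) i y :
  msum_upto (fun q => Defs.limg (M ^+ q) E) i.+1 y ->
  exists n0 z, E n0 /\ msum_upto (fun q => Defs.limg (M ^+ q) E) i z /\ y = n0 + M *m z.
Proof.
elim: i y => [|i IH] y.
  move=> [a [b [/= -> [[u Eu <-] ->]]]].
  exists u, 0; split=> //; split=> //.
  by rewrite mulmx0 addr0 add0r expr0 mul1mx.
move=> [a [b [Sa [[u Eu <-] ->]]]].
have [n0 [z [En0 [Sz ->]]]] := IH a Sa.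
exists n0, (z + M ^+ i *m u); split=> //; split.
  exists z, (M ^+ i *m u); split=> //; split=> //.
  by exists u.
have -> : M ^+ i.+1 = M *m M ^+ i by rewrite exprS mulmxE.
by rewrite mulmxDr mulmxA addrA.
Qed.

Lemma sum_K n m (M : 'M[R]_n) (K : 'M[R]_(m, n)) (E : set 'cV[R]_n) i y :
  msum_upto (fun q => Defs.limg (K *m M ^+ q) E) i y ->
  exists z, msum_upto (fun q => Defs.limg (M ^+ q) E) i z /\ y = K *m z.
Proof.
elim: i y => [|i IH] y.
  by move=> /= ->; exists 0; split=> //; rewrite mulmx0.
move=> [a [b [Sa [[u Eu <-] ->]]]].
have [z [Sz ->]] := IH a Sa.
exists (z + M ^+ i *m u); split.
  exists z, (M ^+ i *m u); split=> //; split=> //.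
  by exists u.
by rewrite mulmxDr mulmxA.
Qed.

Lemma sum_add n (f : nat -> set 'cV[R]_n) i y u :
  msum_upto f i y -> f i u -> msum_upto f i.+1 (y + u).
Proof. by move=> Sy fu; exists y, u. Qed.

Lemma limg_in m n (M : 'M[R]_(m, n)) (E : set 'cV[R]_n) u :
  E u -> Defs.limg M E (M *m u).
Proof. by move=> Eu; exists u. Qed.

End Helpers.

(* P models the conditional law given y_{0:k}: under it, the estimate
   xh = \hat x_k and the applied input u_k are fixed, while the error
   e_k and the innovation term n_k are random variables on Omega. *)
Theorem theorem1 (R : realType) (nx nu ny : nat)
  (A : 'M[R]_nx) (B : 'M[R]_(nx, nu)) (C : 'M[R]_(ny, nx)) (K : 'M[R]_(nu, nx))
  (X Ee En Xf : set 'cV[R]_nx) (U : set 'cV[R]_nu) (px pf : R) (N : nat)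
  (l : 'cV[R]_nx -> 'cV[R]_nu -> R) (O : 'cV[R]_nx -> R)
  (d : measure_display) (Omega : measurableType d) (P : probability Omega R)
  (e n : Omega -> 'cV[R]_nx)
  (xh : 'cV[R]_nx) (c : nat -> 'cV[R]_nu) :
  controllable A B -> observable A C ->
  polyhedron X -> polytope U ->
  0 < px < 1 -> 0 < pf < 1 ->
  polytope Ee -> zero_interior Ee ->
  polytope En -> zero_interior En ->
  measurable [set w | Ee (e w)] -> ((1 - px)%:E <= P [set w | Ee (e w)])%E ->
  measurable [set w | En (n w)] -> ((1 - pf)%:E <= P [set w | En (n w)])%E ->
  schur (Acl A B K) ->
  Xf `<=` Xhat X Ee ->
  (forall x, Xf x -> forall v, En v -> Xf (Acl A B K *m x + v)) ->
  (forall x, Xf x -> U (K *m x)) ->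
  (0 < N)%N ->
  (* (MPC_k) is feasible and c is an optimal solution; u_k = c 0 *)
  mpc_feasible A B K X Ee En Xf U N xh ->
  mpc_optimal A B K X Ee En Xf U N l O xh c ->
  (* next estimate  \hat x_{k+1} = A \hat x_k + B u_k + n_k *)
  (forall w, En (n w) ->
     mpc_feasible A B K X Ee En Xf U N (A *m xh + B *m c 0%N + n w)) /\
  (exists S : set Omega, measurable S /\ ((1 - pf)%:E <= P S)%E /\
     forall w, S w ->
       mpc_feasible A B K X Ee En Xf U N (A *m xh + B *m c 0%N + n w)).
Proof.
move=> _ _ _ _ _ _ _ _ _ _ _ _ mn Pn _ XfXh RPI XfU N0 _ [[adm term] _].
have key : forall w, En (n w) -> mpc_feasible A B K X Ee En Xf U N (A *m xh + B *m c 0%N + n w).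
  move=> w; set v := n w => Ev.
  case: N N0 adm term => // M _ adm term.
  set Ac := Acl A B K.
  set xb := traj A B xh c.
  pose c' i := if (i < M)%N then c i.+1 + K *m (Ac ^+ i *m v)
               else K *m (xb M.+1 + Ac ^+ M *m v).
  have tr : forall i, (i <= M)%N ->
      traj A B (A *m xh + B *m c 0%N + v) c' i = xb i.+1 + Ac ^+ i *m v.
    have trS : forall x0 (cc : nat -> 'cV[R]_nu) j,
        traj A B x0 cc j.+1 = A *m traj A B x0 cc j + B *m cc j by [].
    elim=> [|i IH] Hi.
      by rewrite /= expr0 mul1mx.
    rewrite trS IH ?(ltnW Hi) // /c' Hi.
    have -> : xb i.+2 = A *m xb i.+1 + B *m c i.+1 by [].
    have -> : Ac ^+ i.+1 = Ac *m Ac ^+ i by rewrite exprS mulmxE.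
    rewrite -mulmxA.
    move: (xb i.+1) (Ac ^+ i *m v) (c i.+1) => x y z.
    rewrite /Ac /Acl !mulmxDr mulmxDl mulmxA.
    by rewrite addrACA.
  exists c'; split.
    move=> i Hi; rewrite tr; last by rewrite -ltnS.
    have [Hl|Hge] := boolP (i < M)%N.
      have [Xi Ui] := adm i.+1 Hl.
      rewrite /c' Hl; split.
        by move=> y Sy; rewrite -addrA (addrC _ y); apply: Xi; apply: sum_add => //; exact: limg_in.
      move=> y Sy; rewrite -addrA (addrC _ y); apply: Ui; apply: sum_add => //.
      by rewrite mulmxA; apply: limg_in.
    have iM : i = M by apply/eqP; rewrite eqn_leq -ltnS Hi leqNgt Hge.
    subst i; rewrite /c' ltnn; split.
      move=> y Sy; apply: XfXh; rewrite -addrA (addrC _ y); apply: term.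
      by apply: sum_add => //; exact: limg_in.
    move=> y /sum_K [z [Sz ->]]; rewrite -mulmxDr -addrA (addrC _ z); apply: XfU; apply: term.
    by apply: sum_add => //; exact: limg_in.
  rewrite /XfRF /= tr // /c' ltnn.
  have -> : A *m (xb M.+1 + Ac ^+ M *m v) + B *m (K *m (xb M.+1 + Ac ^+ M *m v))
          = Ac *m (xb M.+1 + Ac ^+ M *m v) by rewrite /Ac /Acl mulmxDl mulmxA.
  move=> y /sum_shift [n0 [z [En0 [Sz ->]]]].
  rewrite -/Ac addrCA -mulmxDr addrC; apply: RPI => //.
  rewrite -addrA (addrC _ z); apply: term.
  by apply: sum_add => //; exact: limg_in.
split; first exact: key.
exists [set w | En (n w)]; split=> //; split=> //.
Qed.
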